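(* Let $N=\{1,\dots,n\}$ and let $F:2^N\to\mathbb{R}$ be quasi-submodular. For the sequences $(X_t),(Y_t)$ generated by the maximization procedure (described in the context), at every iteration $t$ other than the last one (i.e., whenever $X_{t+1}\ne X_t$ or $Y_{t+1}\ne Y_t$), we have $F(X_{t+1})>F(X_t)$ or $F(Y_{t+1})>F(Y_t)$.
   Context: For $A\subseteq N$ and $i\in N$, write $A+i=A\cup\{i\}$, $A-i=A\setminus\{i\}$, and $F(i\mid A)=F(A+i)-F(A)$. $F$ is quasi-submodular if for all $X,Y\subseteq N$ both hold: $F(X\cap Y)\ge F(X)\Rightarrow F(Y)\ge F(X\cup Y)$, and $F(X\cap Y)>F(X)\Rightarrow F(Y)>F(X\cup Y)$. Maximization procedure: set $X_0=\emptyset$, $Y_0=N$; for $t=0,1,2,\dots$: let $U_t=\{u\in Y_t\setminus X_t: F(u\mid Y_t-u)>0\}$ and $X_{t+1}=X_t\cup U_t$; let $D_t=\{d\in Y_t\setminus X_t: F(d\mid X_t)<0\}$ and $Y_{t+1}=Y_t\setminus D_t$; if $X_{t+1}=X_t$ and $Y_{t+1}=Y_t$, stop and output $[X_t,Y_t]$; otherwise continue with $t+1$. *)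

(* Defs.v *)
(* Ground set N = {1..n} is modelled as 'I_n; subsets as {set 'I_n}. *)
From mathcomp Require Import all_boot all_order all_algebra.
Set Implicit Arguments. Unset Strict Implicit. Unset Printing Implicit Defensive.
Import Order.TTheory GRing.Theory Num.Theory.
Local Open Scope ring_scope.

Section QS.
Variables (R : realFieldType) (n : nat) (F : {set 'I_n} -> R).

Definition marg (i : 'I_n) (A : {set 'I_n}) : R := F (i |: A) - F A.

Definition quasi_submodular : Prop :=
  forall X Y : {set 'I_n},
    (F (X :&: Y) >= F X -> F Y >= F (X :|: Y)) /\
    (F (X :&: Y) > F X -> F Y > F (X :|: Y)).

Definition Uset (X Y : {set 'I_n}) : {set 'I_n} :=
  [set u in Y :\: X | marg u (Y :\ u) > 0].
Definition Dset (X Y : {set 'I_n}) : {set 'I_n} :=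
  [set d in Y :\: X | marg d X < 0].

Definition mstep (p : {set 'I_n} * {set 'I_n}) : {set 'I_n} * {set 'I_n} :=
  (p.1 :|: Uset p.1 p.2, p.2 :\: Dset p.1 p.2).

(* (X_t, Y_t), starting from (X_0, Y_0) = (emptyset, N).  Once the procedure
   stops the step is the identity, so the sequence is constant afterwards. *)
Definition XY (t : nat) : {set 'I_n} * {set 'I_n} := iter t mstep (set0, setT).
Definition Xs (t : nat) := (XY t).1.
Definition Ys (t : nat) := (XY t).2.
End QS.

(* Main.v *)
Require Import Defs.
From mathcomp Require Import all_boot all_order all_algebra.
Import Order.TTheory GRing.Theory Num.Theory.
Local Open Scope ring_scope.

Section L.
Variables (R : realFieldType) (n : nat) (F : {set 'I_n} -> R).
Hypothesis qs : quasi_submodular F.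

Lemma capE (A B : {set 'I_n}) i : A \subset B -> i \notin B ->
  (i |: A) :&: B = A /\ (i |: A) :|: B = i |: B.
Proof.
move=> /subsetP AB iB; split; apply/setP=> x; rewrite !inE;
  case: (eqVneq x i) => [->|] /=.
- by rewrite (negbTE iB); apply/esym/negP => /AB; rewrite (negbTE iB).
- by case xA: (x \in A) => //=; rewrite AB.
- by [].
- by case xA: (x \in A) => //=; rewrite AB.
Qed.

Lemma mono_pos (A B : {set 'I_n}) i : A \subset B -> i \notin B ->
  0 < marg F i B -> 0 < marg F i A.
Proof.
move=> AB iB; rewrite /marg !subr_gt0 => h.
have [E1 E2] := capE _ _ _ AB iB.
have [q _] := qs (i |: A) B; rewrite E1 E2 in q.
by rewrite ltNge; apply/negP => /q; rewrite leNgt h.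
Qed.

Lemma mono_neg (A B : {set 'I_n}) i : A \subset B -> i \notin B ->
  marg F i A < 0 -> marg F i B < 0.
Proof.
move=> AB iB; rewrite /marg !subr_lt0 => h.
have [E1 E2] := capE _ _ _ AB iB.
have [_ q] := qs (i |: A) B; rewrite E1 E2 in q.
exact: q.
Qed.

Lemma UD_disj (X Y : {set 'I_n}) : X \subset Y -> [disjoint Uset F X Y & Dset F X Y].
Proof.
move=> XY; rewrite -setI_eq0; apply/eqP/setP => u; rewrite !inE.
apply/negP => /and3P [/andP [/andP [uX uY] hU] _ hD].
have : 0 < marg F u X.
  apply: (mono_pos _ _ _ _ _ hU); last by rewrite !inE eqxx.
  apply/subsetP => x xX; rewrite !inE (subsetP XY) // andbT.
  by apply/eqP => e; move: uX; rewrite -e xX.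
by rewrite ltNge (ltW hD).
Qed.

Lemma add_chain (X Y : {set 'I_n}) : X \subset Y -> forall k (S : {set 'I_n}), #|S| = k ->
  S \subset Uset F X Y -> (S == set0) || (F X < F (X :|: S)).
Proof.
move=> XY; elim=> [|k IH] S cS SU.
  by move/eqP: cS; rewrite cards_eq0 => ->.
have : (0 < #|S|)%N by rewrite cS.
rewrite card_gt0 => /set0Pn [u uS].
have cS' : #|S :\ u| = k by move: cS; rewrite (cardsD1 u S) uS add1n => -[].
have S'U : S :\ u \subset Uset F X Y by apply: subset_trans SU; apply: subsetDl.
have le1 : F X <= F (X :|: (S :\ u)).
  case/orP: (IH _ cS' S'U) => [/eqP ->|/ltW //]; by rewrite setU0.
have uU : u \in Uset F X Y by exact: (subsetP SU).
move: (uU); rewrite !inE => /andP [/andP [uX uY] hU].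
apply/orP; right; apply: (le_lt_trans le1).
have -> : X :|: S = u |: (X :|: S :\ u).
  by rewrite setUCA setD1K.
rewrite -subr_gt0; apply: (mono_pos _ _ _ _ _ hU); last by rewrite !inE eqxx.
apply/subsetP => x; rewrite !inE => /orP [xX|/andP [xu xS]].
  rewrite (subsetP XY) // andbT; apply/eqP => e; move: uX; by rewrite -e xX.
rewrite xu /=; move: (subsetP SU x xS); rewrite !inE => /andP [/andP [] //].
Qed.

Lemma del_chain (X Y : {set 'I_n}) : X \subset Y -> forall k (S : {set 'I_n}), #|S| = k ->
  S \subset Dset F X Y -> (S == set0) || (F Y < F (Y :\: S)).
Proof.
move=> XY; elim=> [|k IH] S cS SD.
  by move/eqP: cS; rewrite cards_eq0 => ->.
have : (0 < #|S|)%N by rewrite cS.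
rewrite card_gt0 => /set0Pn [d dS].
have cS' : #|S :\ d| = k by move: cS; rewrite (cardsD1 d S) dS add1n => -[].
have S'D : S :\ d \subset Dset F X Y by apply: subset_trans SD; apply: subsetDl.
have le1 : F Y <= F (Y :\: (S :\ d)).
  case/orP: (IH _ cS' S'D) => [/eqP ->|/ltW //]; by rewrite setD0.
have dD : d \in Dset F X Y by exact: (subsetP SD).
move: (dD); rewrite !inE => /andP [/andP [dX dY] hD].
apply/orP; right; apply: (le_lt_trans le1).
set W := Y :\: (S :\ d).
have dW : d \in W by rewrite !inE eqxx dY.
have -> : Y :\: S = W :\ d.
  apply/setP => x; rewrite !inE; case: (eqVneq x d) => [->|] /=.
    by rewrite dS.
  by [].
have EW : W = d |: (W :\ d) by rewrite setD1K.
have h := mono_neg X (W :\ d) d.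
have : marg F d (W :\ d) < 0.
  apply: h; [|by rewrite !inE eqxx|exact: hD].
  apply/subsetP => x xX; rewrite !inE (subsetP XY) // andbT.
  have xd : x != d by apply/eqP => e; move: dX; rewrite -e xX.
  rewrite xd /=; apply/negP => /(subsetP SD); rewrite !inE xX //=.
rewrite /marg setD1K // subr_lt0 //.
Qed.

Lemma inv t : Xs F t \subset Ys F t.
Proof.
elim: t => [|t IH]; first by rewrite /Xs /Ys /= sub0set.
rewrite /Xs /Ys /XY iterS -/(XY F t) /mstep /=.
rewrite -/(Xs F t) -/(Ys F t).
have dj := UD_disj _ _ IH.
apply/subsetP => x; rewrite in_setU => /orP [xX|xU].
  rewrite in_setD (subsetP IH) // andbT.
  by rewrite !inE xX.
have xY : x \in Ys F t by move: xU; rewrite !inE => /andP [/andP []].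
rewrite in_setD xY andbT; apply/negP => xD.
by move: (disjointFr dj xU); rewrite xD.
Qed.
End L.

Theorem lemma6 (R : realFieldType) (n : nat) (F : {set 'I_n} -> R) :
  quasi_submodular F ->
  forall t : nat,
    (Xs F t.+1 != Xs F t) || (Ys F t.+1 != Ys F t) ->
    (F (Xs F t.+1) > F (Xs F t)) \/ (F (Ys F t.+1) > F (Ys F t)).
Proof.
move=> qs t.
have XY := inv _ _ F qs t.
have -> : Xs F t.+1 = Xs F t :|: Uset F (Xs F t) (Ys F t) by [].
have -> : Ys F t.+1 = Ys F t :\: Dset F (Xs F t) (Ys F t) by [].
case: (eqVneq (Uset F (Xs F t) (Ys F t)) set0) => [U0|Un0].
  rewrite U0 setU0 eqxx /= => hD; right.
  case/orP: (del_chain _ _ F qs _ _ XY _ _ (erefl _) (subxx _)) => // /eqP D0.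
  by move: hD; rewrite D0 setD0 eqxx.
move=> _; left.
case/orP: (add_chain _ _ F qs _ _ XY _ _ (erefl _) (subxx _)) => //.
by rewrite (negbTE Un0).
Qed.
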